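(* Let $A$ and $B$ be weighted geometric mean closed Archimedean $\Phi$-algebras over $\mathbb{K}$ with unit elements $e$ and $e'$ respectively. Let $C$ be a $\Phi$-subalgebra of $A$ and let $T\colon C\to B$ be a multiplicative vector lattice homomorphism with $T(e)=e'$. Let $a\in A^+$ and $r\in(0,\infty)$. If $a\in C$ and $a^r\in C$, then $T(a^r)=\bigl(T(a)\bigr)^r$.
   Context: $\mathbb{K}$ denotes $\mathbb{R}$ or $\mathbb{C}$. An Archimedean vector lattice over $\mathbb{C}$ is $E+iE$ where $E$ is an Archimedean real vector lattice in which $\sup\{(\cos\theta)f+(\sin\theta)g:\theta\in[0,2\pi]\}$ exists for all $f,g$, with modulus $|f+ig|$ equal to that supremum; over $\mathbb{R}$ it is an Archimedean real vector lattice. $A^+=\{a:|a|=a\}$, $A_\rho=A^+-A^+$ with its real lattice order. An Archimedean $\Phi$-algebra over $\mathbb{K}$: $A_\rho$ is an $f$-algebra with multiplicative identity (multiplication extended complex-bilinearly in the complex case); a $\Phi$-subalgebra is a subalgebra and vector sublattice containing the unit. $A$ is weighted geometric mean closed if for all $f_1,\dots,f_n\in A$, $r_k\in(0,1)$ with $\sum r_k=1$, $\triangle_{k=1}^n(f_k,r_k):=\inf\{\sum r_k\theta_k|f_k|:\theta_k>0,\ \prod\theta_k^{r_k}=1\}$ exists in $A$. For $a\in A^+$ and $r\in(0,\infty)$, with $\lfloor r\rfloor=\max\{n\in\mathbb{N}\cup\{0\}:n\le r\}$ and $\tilde r=r-\lfloor r\rfloor$, define $a^r=a^{\lfloor r\rfloor}\inf\{\tilde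 r\theta_1a+(1-\tilde r)\theta_2e:\theta_1,\theta_2\in(0,\infty),\ \theta_1^{\tilde r}\theta_2^{1-\tilde r}=1\}$, where $a^{0}=e$ and the infimum is taken to be $e$ when $\tilde r=0$ (so $a^r$ is the ordinary power for integer $r$). $T$ multiplicative means $T(ab)=T(a)T(b)$; vector lattice homomorphism means linear with $|T(f)|=T(|f|)$. *)

(* Defs.v *)
From Stdlib Require Import Reals.
Open Scope R_scope.

(* Archimedean real f-algebras with unit (real Phi-algebras).           *)
Record RPhi := MkRPhi {
  car :> Type;
  zr : car;
  add : car -> car -> car;
  opp : car -> car;
  scal : R -> car -> car;
  mul : car -> car -> car;
  one : car;
  le : car -> car -> Prop;
  addA : forall x y w, add x (add y w) = add (add x y) w;
  addC : forall x y, add x y = add y x;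
  add0 : forall x, add zr x = x;
  addN : forall x, add x (opp x) = zr;
  scalA : forall a b x, scal a (scal b x) = scal (a * b) x;
  scal1 : forall x, scal 1 x = x;
  scalDr : forall a x y, scal a (add x y) = add (scal a x) (scal a y);
  scalDl : forall a b x, scal (a + b) x = add (scal a x) (scal b x);
  le_refl : forall x, le x x;
  le_antisym : forall x y, le x y -> le y x -> x = y;
  le_trans : forall x y w, le x y -> le y w -> le x w;
  le_add : forall x y w, le x y -> le (add x w) (add y w);
  le_scal : forall a x, 0 <= a -> le zr x -> le zr (scal a x);
  sup_ex : forall x y, exists s,
      le x s /\ le y s /\ (forall u, le x u -> le y u -> le s u);
  archi : forall x y,
      (forall n : nat, le zr (scal (INR n) x) /\ le (scal (INR n) x) y) -> x = zr;
  mulA : forall x y w, mul x (mul y w) = mul (mul x y) w;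
  mulDl : forall x y w, mul (add x y) w = add (mul x w) (mul y w);
  mulDr : forall x y w, mul w (add x y) = add (mul w x) (mul w y);
  mul_scall : forall a x y, mul (scal a x) y = scal a (mul x y);
  mul_scalr : forall a x y, mul x (scal a y) = scal a (mul x y);
  mul_pos : forall x y, le zr x -> le zr y -> le zr (mul x y);
  f_prop : forall x y w,
      (le zr x /\ le zr y /\ (forall u, le u x -> le u y -> le u zr)) ->
      le zr w ->
      (le zr (mul w x) /\ le zr y /\ (forall u, le u (mul w x) -> le u y -> le u zr)) /\
      (le zr (mul x w) /\ le zr y /\ (forall u, le u (mul x w) -> le u y -> le u zr));
  one_l : forall x, mul one x = x;
  one_r : forall x, mul x one = x
}.

Arguments zr {_}. Arguments add {_}. Arguments opp {_}. Arguments scal {_}.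
Arguments mul {_}. Arguments one {_}. Arguments le {_}.

Definition IsSup (E : RPhi) (S : E -> Prop) (m : E) : Prop :=
  (forall x, S x -> le x m) /\ (forall u, (forall x, S x -> le x u) -> le m u).

(* The scalar field K and the Phi-algebra over K built on A_rho = E.    *)
(* Over R the algebra is E itself; over C it is E + iE = E * E.         *)
Inductive Kfield := Kreal | Kcomplex.

Definition Kscalar (K : Kfield) : Type :=
  match K with Kreal => R | Kcomplex => (R * R)%type end.

Definition Kcar (K : Kfield) (E : RPhi) : Type :=
  match K with Kreal => car E | Kcomplex => (car E * car E)%type end.

Definition Kzero (K : Kfield) (E : RPhi) : Kcar K E :=
  match K as K0 return Kcar K0 E with
  | Kreal => @zr E
  | Kcomplex => (@zr E, @zr E)
  end.

Definition Kone (K : Kfield) (E : RPhi) : Kcar K E :=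
  match K as K0 return Kcar K0 E with
  | Kreal => @one E
  | Kcomplex => (@one E, @zr E)
  end.

Definition Kadd (K : Kfield) (E : RPhi) : Kcar K E -> Kcar K E -> Kcar K E :=
  match K as K0 return Kcar K0 E -> Kcar K0 E -> Kcar K0 E with
  | Kreal => @add E
  | Kcomplex => fun p q => (add (fst p) (fst q), add (snd p) (snd q))
  end.

Definition Kopp (K : Kfield) (E : RPhi) : Kcar K E -> Kcar K E :=
  match K as K0 return Kcar K0 E -> Kcar K0 E with
  | Kreal => @opp E
  | Kcomplex => fun p => (opp (fst p), opp (snd p))
  end.

(* multiplication by a scalar of K: (a+ib)(x+iy) = (ax - by) + i(ay + bx) *)
Definition Kscal (K : Kfield) (E : RPhi) : Kscalar K -> Kcar K E -> Kcar K E :=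
  match K as K0 return Kscalar K0 -> Kcar K0 E -> Kcar K0 E with
  | Kreal => @scal E
  | Kcomplex => fun c p =>
      (add (scal (fst c) (fst p)) (opp (scal (snd c) (snd p))),
       add (scal (fst c) (snd p)) (scal (snd c) (fst p)))
  end.

Definition Krscal (K : Kfield) (E : RPhi) : R -> Kcar K E -> Kcar K E :=
  match K as K0 return R -> Kcar K0 E -> Kcar K0 E with
  | Kreal => @scal E
  | Kcomplex => fun a p => (scal a (fst p), scal a (snd p))
  end.

(* complex-bilinear extension of the multiplication *)
Definition Kmul (K : Kfield) (E : RPhi) : Kcar K E -> Kcar K E -> Kcar K E :=
  match K as K0 return Kcar K0 E -> Kcar K0 E -> Kcar K0 E with
  | Kreal => @mul E
  | Kcomplex => fun p q =>
      (add (mul (fst p) (fst q)) (opp (mul (snd p) (snd q))),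
       add (mul (fst p) (snd q)) (mul (snd p) (fst q)))
  end.

Definition IsAbs (K : Kfield) (E : RPhi) : Kcar K E -> Kcar K E -> Prop :=
  match K as K0 return Kcar K0 E -> Kcar K0 E -> Prop with
  | Kreal => fun f m => IsSup E (fun x => x = f \/ x = opp f) m
  | Kcomplex => fun f m =>
      snd m = zr /\
      IsSup E (fun x => exists t, 0 <= t <= 2 * PI /\
                 x = add (scal (cos t) (fst f)) (scal (sin t) (snd f))) (fst m)
  end.

(* Archimedean vector lattice over K: every modulus exists (automatic over R,
   this is the defining supremum condition over C). *)
Definition KVL (K : Kfield) (E : RPhi) : Prop :=
  forall f : Kcar K E, exists m, IsAbs K E f m.

Definition Kpos (K : Kfield) (E : RPhi) (a : Kcar K E) : Prop := IsAbs K E a a.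

Definition Kle (K : Kfield) (E : RPhi) (a b : Kcar K E) : Prop :=
  Kpos K E (Kadd K E b (Kopp K E a)).

Definition KIsInf (K : Kfield) (E : RPhi) (S : Kcar K E -> Prop) (m : Kcar K E) : Prop :=
  (forall x, S x -> Kle K E m x) /\
  (forall l, (forall x, S x -> Kle K E l x) -> Kle K E l m).

Fixpoint Ksum (K : Kfield) (E : RPhi) (n : nat) (F : nat -> Kcar K E) : Kcar K E :=
  match n with
  | O => Kzero K E
  | S n' => Kadd K E (Ksum K E n' F) (F n')
  end.

Fixpoint Rsumn (n : nat) (F : nat -> R) : R :=
  match n with O => 0 | S n' => Rsumn n' F + F n' end.

Fixpoint Rprodn (n : nat) (F : nat -> R) : R :=
  match n with O => 1 | S n' => Rprodn n' F * F n' end.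

(* weighted geometric mean closedness; g k plays the role of |f_k| *)
Definition WGMClosed (K : Kfield) (E : RPhi) : Prop :=
  forall (n : nat) (f : nat -> Kcar K E) (r : nat -> R) (g : nat -> Kcar K E),
    (forall k, (k < n)%nat -> 0 < r k < 1) ->
    Rsumn n r = 1 ->
    (forall k, (k < n)%nat -> IsAbs K E (f k) (g k)) ->
    exists m, KIsInf K E
      (fun x => exists th : nat -> R,
          (forall k, (k < n)%nat -> 0 < th k) /\
          Rprodn n (fun k => Rpower (th k) (r k)) = 1 /\
          x = Ksum K E n (fun k => Krscal K E (r k * th k) (g k))) m.

Fixpoint Kpow_nat (K : Kfield) (E : RPhi) (a : Kcar K E) (n : nat) : Kcar K E :=
  match n with
  | O => Kone K E
  | S n' => Kmul K E (Kpow_nat K E a n') a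
  end.

Definition IsRPow (K : Kfield) (E : RPhi) (a : Kcar K E) (r : R) (p : Kcar K E) : Prop :=
  exists (n : nat) (q : Kcar K E),
    INR n <= r < INR n + 1 /\
    (r = INR n -> q = Kone K E) /\
    (r <> INR n ->
       KIsInf K E
         (fun x => exists t1 t2, 0 < t1 /\ 0 < t2 /\
             Rpower t1 (r - INR n) * Rpower t2 (1 - (r - INR n)) = 1 /\
             x = Kadd K E (Krscal K E ((r - INR n) * t1) a)
                          (Krscal K E ((1 - (r - INR n)) * t2) (Kone K E))) q) /\
    p = Kmul K E (Kpow_nat K E a n) q.

Definition KPhiSub (K : Kfield) (E : RPhi) (C : Kcar K E -> Prop) : Prop :=
  (forall x y, C x -> C y -> C (Kadd K E x y)) /\
  (forall (c : Kscalar K) x, C x -> C (Kscal K E c x)) /\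
  (forall x y, C x -> C y -> C (Kmul K E x y)) /\
  C (Kone K E) /\
  (forall x m, C x -> IsAbs K E x m -> C m).

(* T : C -> B (modelled as a total map, constrained only on C) *)
Definition KLinearOn (K : Kfield) (A B : RPhi) (C : Kcar K A -> Prop)
  (T : Kcar K A -> Kcar K B) : Prop :=
  (forall x y, C x -> C y -> T (Kadd K A x y) = Kadd K B (T x) (T y)) /\
  (forall (c : Kscalar K) x, C x -> T (Kscal K A c x) = Kscal K B c (T x)).

Definition KLatHomOn (K : Kfield) (A B : RPhi) (C : Kcar K A -> Prop)
  (T : Kcar K A -> Kcar K B) : Prop :=
  KLinearOn K A B C T /\
  (forall x m, C x -> IsAbs K A x m -> IsAbs K B (T x) (T m)).

Definition KMultOn (K : Kfield) (A B : RPhi) (C : Kcar K A -> Prop)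
  (T : Kcar K A -> Kcar K B) : Prop :=
  forall x y, C x -> C y -> T (Kmul K A x y) = Kmul K B (T x) (T y).

(* Main.v *)
Require Import Defs.
From Stdlib Require Import Reals.
Open Scope R_scope.
From Stdlib Require Import Lra Lia ClassicalEpsilon FunctionalExtensionality.


Definition sub (E : RPhi) (x y : E) : E := add x (opp y).
Arguments sub {_}.

Lemma addr0 (E : RPhi) (x : E) : add x zr = x.
Proof. rewrite addC; apply add0. Qed.
Lemma addNr (E : RPhi) (x : E) : add (opp x) x = zr.
Proof. rewrite addC; apply addN. Qed.
Lemma addK (E : RPhi) (x y : E) : add (add x y) (opp y) = x.
Proof. rewrite <- addA, addN; apply addr0. Qed.
Lemma addKr (E : RPhi) (x y : E) : add (add x (opp y)) y = x.
Proof. rewrite <- addA, addNr; apply addr0. Qed.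
Lemma add_cancel (E : RPhi) (x y z : E) : add x y = add x z -> y = z.
Proof. intro H. rewrite <- (add0 _ y), <- (add0 _ z), <- (addNr _ x), <- !addA, H; reflexivity. Qed.
Lemma add_cancel_r (E : RPhi) (x y z : E) : add y x = add z x -> y = z.
Proof. rewrite (addC _ y x), (addC _ z x). apply add_cancel. Qed.
Lemma opp_unique (E : RPhi) (x y : E) : add x y = zr -> y = opp x.
Proof. intro H. apply (add_cancel _ x). rewrite H, addN; reflexivity. Qed.
Lemma oppK (E : RPhi) (x : E) : opp (opp x) = x.
Proof. symmetry. apply opp_unique. apply addNr. Qed.
Lemma opp0 (E : RPhi) : opp (@zr E) = zr.
Proof. symmetry; apply opp_unique; apply add0. Qed.
Lemma oppD (E : RPhi) (x y : E) : opp (add x y) = add (opp x) (opp y).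
Proof. symmetry; apply opp_unique.
  rewrite (addC _ (opp x)), addA, <- (addA _ x), addN, addr0, addN; reflexivity. Qed.
Lemma scal0l (E : RPhi) (x : E) : scal 0 x = zr.
Proof. apply (add_cancel _ (scal 0 x)). rewrite <- scalDl, Rplus_0_r, addr0; reflexivity. Qed.
Lemma scal0r (E : RPhi) (a : R) : scal a (@zr E) = zr.
Proof. apply (add_cancel _ (scal a zr)). rewrite <- scalDr, add0, addr0; reflexivity. Qed.
Lemma scalNl (E : RPhi) (a : R) (x : E) : scal (- a) x = opp (scal a x).
Proof. apply opp_unique. rewrite <- scalDl, Rplus_opp_r; apply scal0l. Qed.
Lemma scalNr (E : RPhi) (a : R) (x : E) : scal a (opp x) = opp (scal a x).
Proof. apply opp_unique. rewrite <- scalDr, addN; apply scal0r. Qed.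
Lemma scalN1 (E : RPhi) (x : E) : scal (-1) x = opp x.
Proof. replace (-1) with (- (1)) by ring. rewrite scalNl, scal1; reflexivity. Qed.
Lemma scalB (E : RPhi) (a : R) (x y : E) : scal a (sub x y) = sub (scal a x) (scal a y).
Proof. unfold sub; rewrite scalDr, scalNr; reflexivity. Qed.
Lemma mul0l (E : RPhi) (x : E) : mul zr x = zr.
Proof. apply (add_cancel _ (mul zr x)). rewrite <- mulDl, !addr0; reflexivity. Qed.
Lemma mul0r (E : RPhi) (x : E) : mul x zr = zr.
Proof. apply (add_cancel _ (mul x zr)). rewrite <- mulDr, !addr0; reflexivity. Qed.
Lemma mulNl (E : RPhi) (x y : E) : mul (opp x) y = opp (mul x y).
Proof. apply opp_unique. rewrite <- mulDl, addN; apply mul0l. Qed.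
Lemma mulNr (E : RPhi) (x y : E) : mul x (opp y) = opp (mul x y).
Proof. apply opp_unique. rewrite <- mulDr, addN; apply mul0r. Qed.
Lemma mulBr (E : RPhi) (w x y : E) : mul w (sub x y) = sub (mul w x) (mul w y).
Proof. unfold sub; rewrite mulDr, mulNr; reflexivity. Qed.
Lemma mulBl (E : RPhi) (w x y : E) : mul (sub x y) w = sub (mul x w) (mul y w).
Proof. unfold sub; rewrite mulDl, mulNl; reflexivity. Qed.
Lemma addACA (E : RPhi) (a b c d : E) : add (add a b) (add c d) = add (add a c) (add b d).
Proof. rewrite <- !addA; f_equal; rewrite !addA; f_equal; apply addC. Qed.
Lemma sub0 (E : RPhi) (x : E) : sub x zr = x.
Proof. unfold sub; rewrite opp0; apply addr0. Qed.
Lemma subv (E : RPhi) (x : E) : sub x x = zr.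
Proof. apply addN. Qed.
Lemma subD (E : RPhi) (x y z : E) : sub (add x z) (add y z) = sub x y.
Proof. unfold sub; rewrite oppD, addACA, addN, addr0; reflexivity. Qed.
Lemma sub_eq0 (E : RPhi) (x y : E) : sub x y = zr -> x = y.
Proof. intro H. rewrite <- (addKr _ x y). fold (sub x y). rewrite H; apply add0. Qed.
Lemma oppB (E : RPhi) (x y : E) : opp (sub x y) = sub y x.
Proof. unfold sub; rewrite oppD, oppK, addC; reflexivity. Qed.

Lemma le_add2 (E : RPhi) (x y z w : E) : le x y -> le z w -> le (add x z) (add y w).
Proof. intros H1 H2. apply le_trans with (add y z). now apply le_add.
  rewrite (addC _ y z), (addC _ y w); now apply le_add. Qed.
Lemma le_addl (E : RPhi) (x y z : E) : le x y -> le (add z x) (add z y).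
Proof. intro; apply le_add2; [apply le_refl|auto]. Qed.
Lemma le_sub0 (E : RPhi) (x y : E) : le x y -> le zr (sub y x).
Proof. intro H. rewrite <- (addN _ x). now apply le_add. Qed.
Lemma sub0_le (E : RPhi) (x y : E) : le zr (sub y x) -> le x y.
Proof. intro H. apply (le_add _ _ _ x) in H. rewrite add0 in H. unfold sub in H. now rewrite addKr in H. Qed.
Lemma le_opp (E : RPhi) (x y : E) : le x y -> le (opp y) (opp x).
Proof. intro H. apply sub0_le. unfold sub; rewrite oppK, addC. now apply le_sub0. Qed.
Lemma le_opp_inv (E : RPhi) (x y : E) : le (opp y) (opp x) -> le x y.
Proof. intro H. apply le_opp in H. now rewrite !oppK in H. Qed.
Lemma le_add_inv (E : RPhi) (x y z : E) : le (add x z) (add y z) -> le x y.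
Proof. intro H. apply (le_add _ _ _ (opp z)) in H. now rewrite !addK in H. Qed.
Lemma le_scal_mono (E : RPhi) (c : R) (x y : E) : 0 <= c -> le x y -> le (scal c x) (scal c y).
Proof. intros Hc H. apply sub0_le. rewrite <- scalB. apply le_scal; auto. now apply le_sub0. Qed.
Lemma le_scal_l (E : RPhi) (c d : R) (x : E) : c <= d -> le zr x -> le (scal c x) (scal d x).
Proof. intros Hc H. apply sub0_le. unfold sub. rewrite <- scalNl, <- scalDl. apply le_scal; auto; lra. Qed.
Lemma le_mul_l (E : RPhi) (w x y : E) : le zr w -> le x y -> le (mul w x) (mul w y).
Proof. intros Hw H. apply sub0_le. rewrite <- mulBr. apply mul_pos; auto. now apply le_sub0. Qed.
Lemma le_mul_r (E : RPhi) (w x y : E) : le zr w -> le x y -> le (mul x w) (mul y w).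
Proof. intros Hw H. apply sub0_le. rewrite <- mulBl. apply mul_pos; auto. now apply le_sub0. Qed.
Lemma le_sub_add (E : RPhi) (x y z : E) : le (sub x z) y -> le x (add y z).
Proof. intro H. apply (le_add _ _ _ z) in H. unfold sub in H; now rewrite addKr in H. Qed.
Lemma le_add_sub (E : RPhi) (x y z : E) : le x (add y z) -> le (sub x z) y.
Proof. intro H. apply (le_add _ _ _ (opp z)) in H. unfold sub; now rewrite addK in H. Qed.
Lemma le_addr_sub (E : RPhi) (x u z : E) : le x (sub u z) -> le (add x z) u.
Proof. intro H. apply (le_add _ _ _ z) in H. unfold sub in H; now rewrite addKr in H. Qed.
Lemma le_sub_addr (E : RPhi) (x u z : E) : le (add x z) u -> le x (sub u z).
Proof. intro H. apply (le_add _ _ _ (opp z)) in H. unfold sub; now rewrite addK in H. Qed.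
Lemma le0_add (E : RPhi) (x y : E) : le zr x -> le zr y -> le zr (add x y).
Proof. intros. rewrite <- (add0 _ zr). now apply le_add2. Qed.

Definition sup (E : RPhi) (x y : E) : E :=
  proj1_sig (constructive_indefinite_description _ (sup_ex E x y)).
Arguments sup {_}.
Lemma sup_spec (E : RPhi) (x y : E) :
  le x (sup x y) /\ le y (sup x y) /\ (forall u, le x u -> le y u -> le (sup x y) u).
Proof. unfold sup. destruct (constructive_indefinite_description _ _) as [s Hs]; exact Hs. Qed.
Lemma sup_l (E : RPhi) (x y : E) : le x (sup x y). Proof. apply sup_spec. Qed.
Lemma sup_r (E : RPhi) (x y : E) : le y (sup x y). Proof. apply sup_spec. Qed.
Lemma sup_le (E : RPhi) (x y u : E) : le x u -> le y u -> le (sup x y) u.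
Proof. apply sup_spec. Qed.
Lemma sup_unique (E : RPhi) (x y m : E) : le x m -> le y m ->
  (forall u, le x u -> le y u -> le m u) -> m = sup x y.
Proof. intros H1 H2 H3. apply le_antisym. apply H3; [apply sup_l|apply sup_r]. now apply sup_le. Qed.
Lemma sup_C (E : RPhi) (x y : E) : sup x y = sup y x.
Proof. apply sup_unique; [apply sup_r|apply sup_l|intros; now apply sup_le]. Qed.
Lemma sup_transl (E : RPhi) (x y z : E) : sup (add x z) (add y z) = add (sup x y) z.
Proof. symmetry. apply sup_unique.
  - apply le_add, sup_l.  - apply le_add, sup_r.
  - intros u H1 H2. apply le_addr_sub. apply sup_le; apply le_sub_addr; auto. Qed.
Lemma sup_scal (E : RPhi) (c : R) (x y : E) : 0 < c -> sup (scal c x) (scal c y) = scal c (sup x y).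
Proof. intro Hc. symmetry. apply sup_unique.
  - apply le_scal_mono; [lra|apply sup_l].  - apply le_scal_mono; [lra|apply sup_r].
  - intros u H1 H2. rewrite <- (scal1 _ u). replace 1 with (c * / c) by (field; lra).
    rewrite <- scalA. apply le_scal_mono; [lra|].
    apply sup_le; rewrite <- (scal1 _ x) || rewrite <- (scal1 _ y);
    replace 1 with (/ c * c) by (field; lra); rewrite <- scalA;
    apply le_scal_mono; auto; left; apply Rinv_0_lt_compat; lra. Qed.
Lemma IsSup_sup (E : RPhi) (x y m : E) :
  IsSup E (fun v => v = x \/ v = y) m <-> m = sup x y.
Proof. split.
  - intros [H1 H2]. apply sup_unique; [apply H1; auto|apply H1; auto|].
    intros u Hx Hy. apply H2. intros v [->| ->]; auto.
  - intros ->. split. intros v [->| ->]; [apply sup_l|apply sup_r].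
    intros u H. apply sup_le; apply H; auto. Qed.

Definition meet (E : RPhi) (x y : E) : E := opp (sup (opp x) (opp y)).
Arguments meet {_}.
Lemma meet_l (E : RPhi) (x y : E) : le (meet x y) x.
Proof. unfold meet. apply le_opp_inv. rewrite oppK. apply sup_l. Qed.
Lemma meet_r (E : RPhi) (x y : E) : le (meet x y) y.
Proof. unfold meet. apply le_opp_inv. rewrite oppK. apply sup_r. Qed.
Lemma meet_ge (E : RPhi) (x y u : E) : le u x -> le u y -> le u (meet x y).
Proof. intros H1 H2. unfold meet. apply le_opp_inv. rewrite oppK. apply sup_le; now apply le_opp. Qed.
Lemma meet_transl (E : RPhi) (x y z : E) : meet (add x z) (add y z) = add (meet x y) z.
Proof. unfold meet. rewrite !oppD, sup_transl, oppD, oppK; reflexivity. Qed.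
Lemma meet_C (E : RPhi) (x y : E) : meet x y = meet y x.
Proof. unfold meet; now rewrite sup_C. Qed.

Definition abs (E : RPhi) (x : E) : E := sup x (opp x).
Arguments abs {_}.
Lemma le_abs (E : RPhi) (x : E) : le x (abs x). Proof. apply sup_l. Qed.
Lemma le_abs_opp (E : RPhi) (x : E) : le (opp x) (abs x). Proof. apply sup_r. Qed.
Lemma abs_opp (E : RPhi) (x : E) : abs (opp x) = abs x.
Proof. unfold abs. rewrite oppK. apply sup_C. Qed.
Lemma abs_scal (E : RPhi) (c : R) (x : E) : 0 < c -> abs (scal c x) = scal c (abs x).
Proof. intro. unfold abs. rewrite <- scalNr. now apply sup_scal. Qed.
Lemma scal2 (E : RPhi) (x : E) : add x x = scal 2 x.
Proof. replace 2 with (1 + 1) by ring. rewrite scalDl, scal1; reflexivity. Qed.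
Lemma scal_half2 (E : RPhi) (x : E) : scal (/2) (add x x) = x.
Proof. rewrite scal2, scalA. replace (/2*2) with 1 by field. apply scal1. Qed.
Lemma abs_ge0 (E : RPhi) (x : E) : le zr (abs x).
Proof. rewrite <- (scal_half2 _ (abs x)). apply le_scal; [lra|].
  rewrite <- (addN _ x). apply le_add2; [apply le_abs|apply le_abs_opp]. Qed.

Lemma sup_formula (E : RPhi) (x y : E) :
  sup x y = scal (/2) (add (add x y) (abs (sub x y))).
Proof.
  set (m := scal (/2) (add x y)). set (d := scal (/2) (sub x y)).
  assert (Hx : x = add d m).
  { unfold d, m. rewrite <- scalDr. unfold sub. rewrite addACA, addNr, addr0. now rewrite scal_half2. }
  assert (Hy : y = add (opp d) m).
  { unfold d, m. rewrite <- scalNr, <- scalDr, oppB. unfold sub. rewrite (addC _ x y), addACA, addNr, addr0.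
    now rewrite scal_half2. }
  rewrite Hx at 1. rewrite Hy at 1. rewrite sup_transl. fold (abs d). unfold d.
  rewrite abs_scal by lra. unfold m. rewrite <- scalDr, addC. reflexivity. Qed.
Lemma meet_formula (E : RPhi) (x y : E) :
  meet x y = scal (/2) (sub (add x y) (abs (sub x y))).
Proof. unfold meet. rewrite sup_formula. rewrite <- scalNr. f_equal.
  unfold sub. rewrite (oppD _ (add (opp x) (opp y))), <- (oppD _ x y), oppK.
  replace (add (opp x) (opp (opp y))) with (opp (add x (opp y))) by (rewrite oppD; reflexivity).
  rewrite abs_opp. reflexivity. Qed.

Definition disj (E : RPhi) (u v : E) : Prop :=
  le zr u /\ le zr v /\ (forall w, le w u -> le w v -> le w zr).
Arguments disj {_}.
Lemma disj_sym (E : RPhi) (u v : E) : disj u v -> disj v u.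
Proof. intros (H1 & H2 & H3). repeat split; auto. Qed.
Lemma disj_self (E : RPhi) (z : E) : disj z z -> z = zr.
Proof. intros (H1 & _ & H3). apply le_antisym; auto. apply H3; apply le_refl. Qed.
Lemma disj_mul (E : RPhi) (u v : E) : disj u v -> mul u v = zr.
Proof. intro H. assert (Hu : le zr u) by apply H. assert (Hv : le zr v) by apply H.
  pose proof (proj2 (f_prop _ u v v H Hv)) as H1.
  pose proof (proj1 (f_prop _ v (mul u v) u (disj_sym _ _ _ H1) Hu)) as H2.
  now apply disj_self. Qed.
Lemma le_meet_disj (E : RPhi) (u v : E) : le zr u -> le zr v -> le (meet u v) zr -> disj u v.
Proof. intros H1 H2 H3. repeat split; auto. intros w Hw1 Hw2.
  apply le_trans with (meet u v); auto. now apply meet_ge. Qed.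
Lemma disj_meet (E : RPhi) (u v : E) : disj u v -> meet u v = zr.
Proof. intros (H1 & H2 & H3). apply le_antisym. apply H3; [apply meet_l|apply meet_r].
  now apply meet_ge. Qed.

Definition pp (E : RPhi) (x : E) : E := sup x zr.
Definition np (E : RPhi) (x : E) : E := sup (opp x) zr.
Arguments pp {_}. Arguments np {_}.
Lemma pp_ge0 (E : RPhi) (x : E) : le zr (pp x). Proof. apply sup_r. Qed.
Lemma np_ge0 (E : RPhi) (x : E) : le zr (np x). Proof. apply sup_r. Qed.
Lemma pp_np (E : RPhi) (x : E) : pp x = add (np x) x.
Proof. unfold pp, np. rewrite <- sup_transl, addNr, add0, sup_C; reflexivity. Qed.
Lemma x_pp_np (E : RPhi) (x : E) : x = sub (pp x) (np x).
Proof. rewrite pp_np. unfold sub. rewrite addC, addA, addNr, add0. reflexivity. Qed.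
Lemma disj_pp_np (E : RPhi) (x : E) : disj (pp x) (np x).
Proof. apply le_meet_disj; [apply pp_ge0|apply np_ge0|].
  assert (np x = add (opp x) (pp x)) as ->.
  { rewrite pp_np, addA, (addC _ (opp x)), addKr; reflexivity. }
  rewrite <- (add0 _ (pp x)) at 1. rewrite meet_transl.
  unfold meet. rewrite opp0, oppK, sup_C. fold (pp x). rewrite addNr. apply le_refl. Qed.
Lemma one_ge0 (E : RPhi) : le zr (@one E).
Proof.
  assert (Hn : np (@one E) = opp (mul (np one) (np one))).
  { rewrite <- (one_r _ (np one)) at 1. rewrite (x_pp_np _ one) at 2. rewrite mulBr.
    rewrite (disj_mul _ _ _ (disj_sym _ _ _ (disj_pp_np _ one))). unfold sub; apply add0. }
  assert (Hz : np (@one E) = zr).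
  { apply le_antisym; [|apply np_ge0]. rewrite Hn. rewrite <- opp0. apply le_opp.
    apply mul_pos; apply np_ge0. }
  rewrite (x_pp_np _ one), Hz, sub0. apply pp_ge0. Qed.

Lemma mul_meet (E : RPhi) (w x y : E) : le zr w -> mul w (meet x y) = meet (mul w x) (mul w y).
Proof. intro Hw. set (m := meet x y).
  assert (Hd : disj (sub x m) (sub y m)).
  { apply le_meet_disj. apply le_sub0, meet_l. apply le_sub0, meet_r.
    unfold sub. rewrite meet_transl. fold m. rewrite addN. apply le_refl. }
  pose proof (proj1 (f_prop _ _ _ w Hd Hw)) as H1.
  pose proof (proj1 (f_prop _ _ _ w (disj_sym _ _ _ H1) Hw)) as H2.
  apply disj_meet in H2. rewrite meet_C in H2.
  assert (Ex : forall z, mul w z = add (mul w (sub z m)) (mul w m)).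
  { intro z. rewrite <- mulDr. unfold sub. rewrite addKr. reflexivity. }
  rewrite (Ex x), (Ex y), meet_transl, H2, add0. reflexivity. Qed.

Lemma arch_le (E : RPhi) (x y z : E) : le zr z ->
  (forall eps, 0 < eps -> le x (add y (scal eps z))) -> le x y.
Proof. intros Hz H. set (w := sup (sub x y) zr).
  assert (Hw : w = zr).
  { apply archi with z. intro n. destruct n as [|k].
    - simpl. rewrite scal0l. split; [apply le_refl|auto].
    - assert (Hn : 0 < INR (S k)) by (apply lt_0_INR; lia).
      split. apply le_scal; [lra|apply sup_r].
      rewrite <- (scal1 _ z). replace 1 with (INR (S k) * / INR (S k)) by (field; lra).
      rewrite <- scalA. apply le_scal_mono; [lra|]. apply sup_le.
      + apply le_add_sub. rewrite addC. apply H. apply Rinv_0_lt_compat; lra.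
      + apply le_scal; auto. left; apply Rinv_0_lt_compat; lra. }
  assert (Hs : le (sub x y) zr) by (rewrite <- Hw; apply sup_l).
  apply le_sub_add in Hs. now rewrite add0 in Hs. Qed.

Lemma Rpower_pos (x y : R) : 0 < Rpower x y.
Proof. unfold Rpower; apply exp_pos. Qed.

Lemma feas_mono (s t1 t2 u1 u2 : R) : 0 < s < 1 -> 0 < t1 -> 0 < t2 -> 0 < u1 -> 0 < u2 ->
  Rpower t1 s * Rpower t2 (1 - s) = 1 -> Rpower u1 s * Rpower u2 (1 - s) = 1 ->
  t2 <= u2 -> u1 <= t1.
Proof. intros Hs H1 H2 H3 H4 Ht Hu Hle.
  destruct (Rle_or_lt u1 t1) as [|Hlt]; auto. exfalso.
  assert (A : Rpower t1 s < Rpower u1 s) by (apply Rlt_Rpower_l; lra).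
  assert (B : Rpower t2 (1 - s) <= Rpower u2 (1 - s)) by (apply Rle_Rpower_l; lra).
  pose proof (Rpower_pos t2 (1 - s)). pose proof (Rpower_pos t1 s).
  assert (Rpower t1 s * Rpower t2 (1 - s) < Rpower u1 s * Rpower u2 (1 - s)).
  { apply Rlt_le_trans with (Rpower u1 s * Rpower t2 (1 - s)).
    apply Rmult_lt_compat_r; lra. apply Rmult_le_compat_l; [left; apply Rpower_pos|lra]. }
  lra. Qed.

Lemma grid_find (d x : R) : 0 < d -> 0 < x -> forall m : nat, x <= d * INR m ->
  exists j : nat, (j < m)%nat /\ x <= d * (INR j + 1) /\ d * INR j <= x.
Proof. intros Hd Hx m. induction m as [|m IH]; intro Hm.
  - simpl in Hm. lra.
  - destruct (Rle_or_lt x (d * INR m)) as [H|H].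
    + destruct (IH H) as (j & Hj1 & Hj2 & Hj3). exists j. split; [lia|auto].
    + exists m. rewrite S_INR in Hm. split; [lia|split; lra]. Qed.

Lemma family_ex (s eps : R) : 0 < s < 1 -> 0 < eps -> exists (N : nat) (f1 f2 : nat -> R),
  (forall j, (j <= N)%nat -> 0 < f1 j /\ 0 < f2 j /\ Rpower (f1 j) s * Rpower (f2 j) (1 - s) = 1) /\
  (forall t1 t2, 0 < t1 -> 0 < t2 -> Rpower t1 s * Rpower t2 (1 - s) = 1 ->
     exists j, (j <= N)%nat /\ s * f1 j <= s * t1 + eps /\ (1 - s) * f2 j <= (1 - s) * t2 + eps).
Proof. intros Hs He.
  set (d := eps / (1 - s)). assert (Hd : 0 < d) by (unfold d; apply Rdiv_lt_0_compat; lra).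
  set (T1 := eps / s). assert (HT1 : 0 < T1) by (unfold T1; apply Rdiv_lt_0_compat; lra).
  set (U := Rpower T1 (- (s / (1 - s)))).
  destruct (INR_unbounded (U / d)) as [N HN].
  assert (HUN : U < d * INR N).
  { unfold Rdiv in HN. apply Rmult_lt_compat_l with (r := d) in HN; auto.
    rewrite <- Rmult_assoc, (Rmult_comm d U), Rmult_assoc, Rinv_r, Rmult_1_r in HN; lra. }
  set (g2 := fun j : nat => if (j <? N)%nat then d * (INR j + 1) else U).
  set (g1 := fun j : nat => if (j <? N)%nat then Rpower (g2 j) (- ((1 - s) / s)) else T1).
  assert (Hfe : forall j, (j <= N)%nat -> 0 < g1 j /\ 0 < g2 j /\ Rpower (g1 j) s * Rpower (g2 j) (1 - s) = 1).
  { intros j Hj. unfold g1, g2. destruct (j <? N)%nat.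
    - split; [apply Rpower_pos|]. split.
      + apply Rmult_lt_0_compat; auto. pose proof (pos_INR j); lra.
      + rewrite Rpower_mult, <- Rpower_plus.
        replace (- ((1 - s) / s) * s + (1 - s)) with 0 by (field; lra).
        apply Rpower_O. apply Rmult_lt_0_compat; auto. pose proof (pos_INR j); lra.
    - split; auto. split; [apply Rpower_pos|]. unfold U. rewrite Rpower_mult, <- Rpower_plus.
      replace (s + - (s / (1 - s)) * (1 - s)) with 0 by (field; lra). apply Rpower_O; auto. }
  exists N, g1, g2. split; auto.
  intros t1 t2 H1 H2 Ht.
  destruct (Rle_or_lt U t2) as [HU|HU].
  - exists N. split; [lia|]. unfold g1, g2. rewrite Nat.ltb_irrefl. split.
    + unfold T1. replace (s * (eps / s)) with eps by (field; lra).
      assert (0 < s * t1) by (apply Rmult_lt_0_compat; lra). lra.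
    + assert ((1 - s) * U <= (1 - s) * t2) by (apply Rmult_le_compat_l; lra). lra.
  - destruct (grid_find d t2 Hd H2 N) as (j & Hj1 & Hj2 & Hj3); [lra|].
    exists j. split; [lia|].
    destruct (Hfe j ltac:(lia)) as (Hg1 & Hg2 & Hg).
    assert (Hb : g2 j = d * (INR j + 1)) by (unfold g2; apply Nat.ltb_lt in Hj1; now rewrite Hj1).
    split.
    + assert (g1 j <= t1).
      { apply (feas_mono s t1 t2 (g1 j) (g2 j)); auto. lra. }
      assert (s * g1 j <= s * t1) by (apply Rmult_le_compat_l; lra). lra.
    + rewrite Hb. assert (Hdd : (1 - s) * d = eps) by (unfold d; field; lra).
      replace ((1 - s) * (d * (INR j + 1))) with ((1 - s) * d * INR j + (1 - s) * d) by ring.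
      rewrite Hdd. assert (eps * INR j <= (1 - s) * t2).
      { rewrite <- Hdd, Rmult_assoc. apply Rmult_le_compat_l; lra. }
      lra. Qed.

Definition IsInfR (E : RPhi) (S : E -> Prop) (m : E) : Prop :=
  (forall x, S x -> le m x) /\ (forall l, (forall x, S x -> le l x) -> le l m).
Definition LT (E : RPhi) (s : R) (a : E) (t1 t2 : R) : E :=
  add (scal (s * t1) a) (scal ((1 - s) * t2) one).
Definition SetR (E : RPhi) (s : R) (a : E) : E -> Prop :=
  fun x => exists t1 t2, 0 < t1 /\ 0 < t2 /\ Rpower t1 s * Rpower t2 (1 - s) = 1 /\ x = LT E s a t1 t2.
Fixpoint rpow (E : RPhi) (a : E) (n : nat) : E :=
  match n with O => one | S k => mul (rpow E a k) a end.
Fixpoint fmeet (E : RPhi) (F : nat -> E) (N : nat) : E :=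
  match N with O => F O | S k => meet (fmeet E F k) (F (S k)) end.

Lemma fmeet_le (E : RPhi) (F : nat -> E) N j : (j <= N)%nat -> le (fmeet E F N) (F j).
Proof. induction N as [|N IH]; intro Hj; simpl.
  - replace j with O by lia. apply le_refl.
  - destruct (Nat.eq_dec j (S N)) as [->|Hn]. apply meet_r.
    apply le_trans with (fmeet E F N). apply meet_l. apply IH; lia. Qed.
Lemma fmeet_ge (E : RPhi) (F : nat -> E) N l : (forall j, (j <= N)%nat -> le l (F j)) -> le l (fmeet E F N).
Proof. induction N as [|N IH]; intro H; simpl. apply H; lia.
  apply meet_ge. apply IH; intros; apply H; lia. apply H; lia. Qed.
Lemma fmeet_mul (E : RPhi) (F : nat -> E) N w : le zr w ->
  mul w (fmeet E F N) = fmeet E (fun j => mul w (F j)) N.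
Proof. intro Hw. induction N as [|N IH]; simpl; auto. rewrite mul_meet, IH; auto. Qed.

Lemma abs_pos (E : RPhi) (z : E) : le zr z -> abs z = z.
Proof. intro H. symmetry; apply sup_unique. apply le_refl.
  apply le_trans with zr; auto. rewrite <- opp0. now apply le_opp. auto. Qed.

Lemma LT_split (E : RPhi) (s t1 t2 eps : R) (x : E) :
  add (scal (s * t1 + eps) x) (scal ((1 - s) * t2 + eps) one) = add (LT E s x t1 t2) (scal eps (add x one)).
Proof. unfold LT. rewrite !scalDl, scalDr. apply addACA. Qed.

Lemma key_lower (E : RPhi) (s eps : R) (x q : E) (N : nat) (f1 f2 : nat -> R) :
  0 < s < 1 -> le zr x -> IsInfR E (SetR E s x) q ->
  (forall t1 t2, 0 < t1 -> 0 < t2 -> Rpower t1 s * Rpower t2 (1 - s) = 1 ->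
     exists j, (j <= N)%nat /\ s * f1 j <= s * t1 + eps /\ (1 - s) * f2 j <= (1 - s) * t2 + eps) ->
  le (fmeet E (fun j => LT E s x (f1 j) (f2 j)) N) (add q (scal eps (add x one))).
Proof. intros Hs Hx [_ Hq] Hf. apply le_sub_add. apply Hq.
  intros y (t1 & t2 & H1 & H2 & Ht & ->). destruct (Hf t1 t2 H1 H2 Ht) as (j & Hj & Ha & Hb).
  apply le_add_sub. apply le_trans with (LT E s x (f1 j) (f2 j)). exact (fmeet_le E (fun j => LT E s x (f1 j) (f2 j)) N j Hj).
  rewrite <- LT_split. unfold LT. apply le_add2; apply le_scal_l; auto. apply one_ge0. Qed.

Record GoodT (A B : RPhi) (C : A -> Prop) (T : A -> B) : Prop := {
  Cadd : forall x y, C x -> C y -> C (add x y);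
  Cscal : forall c x, C x -> C (scal c x);
  Cmul : forall x y, C x -> C y -> C (mul x y);
  Cone : C one;
  Cabs : forall x, C x -> C (abs x);
  Tadd : forall x y, C x -> C y -> T (add x y) = add (T x) (T y);
  Tscal : forall c x, C x -> T (scal c x) = scal c (T x);
  Tabs : forall x, C x -> T (abs x) = abs (T x);
  Tmul : forall x y, C x -> C y -> T (mul x y) = mul (T x) (T y);
  Tone : T one = one }.



Lemma G_opp A B C T (G : GoodT A B C T) x : C x -> C (opp x) /\ T (opp x) = opp (T x).
Proof. intro H. rewrite <- !scalN1. split. now apply (Cscal _ _ _ _ G). now apply (Tscal _ _ _ _ G). Qed.
Lemma G_sub A B C T (G : GoodT A B C T) x y : C x -> C y -> C (sub x y) /\ T (sub x y) = sub (T x) (T y).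
Proof. intros Hx Hy. destruct (G_opp _ _ _ _ G y Hy) as [H1 H2]. unfold sub. split.
  now apply (Cadd _ _ _ _ G). rewrite (Tadd _ _ _ _ G); auto. now rewrite H2. Qed.
Lemma G_meet A B C T (G : GoodT A B C T) x y : C x -> C y -> C (meet x y) /\ T (meet x y) = meet (T x) (T y).
Proof. intros Hx Hy. rewrite !meet_formula.
  assert (Hxy : C (add x y)) by now apply (Cadd _ _ _ _ G).
  destruct (G_sub _ _ _ _ G x y Hx Hy) as [H1 H2].
  assert (Ha : C (abs (sub x y))) by now apply (Cabs _ _ _ _ G).
  destruct (G_sub _ _ _ _ G _ _ Hxy Ha) as [H3 H4]. split. now apply (Cscal _ _ _ _ G).
  rewrite (Tscal _ _ _ _ G), H4, (Tadd _ _ _ _ G), (Tabs _ _ _ _ G), H2; auto. Qed.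
Lemma G_zero A B C T (G : GoodT A B C T) : C zr /\ T zr = zr.
Proof. rewrite <- (scal0l _ one). split. apply (Cscal _ _ _ _ G), (Cone _ _ _ _ G).
  rewrite (Tscal _ _ _ _ G). apply scal0l. apply (Cone _ _ _ _ G). Qed.
Lemma G_mono A B C T (G : GoodT A B C T) x y : C x -> C y -> le x y -> le (T x) (T y).
Proof. intros Hx Hy H. destruct (G_sub _ _ _ _ G y x Hy Hx) as [H1 H2].
  apply sub0_le. rewrite <- H2. apply le_sub0 in H. rewrite <- (abs_pos _ _ H).
  rewrite (Tabs _ _ _ _ G); auto. apply abs_ge0. Qed.
Lemma G_pow A B C T (G : GoodT A B C T) a n : C a -> C (rpow A a n) /\ T (rpow A a n) = rpow B (T a) n.
Proof. intro Ha. induction n as [|n [IH1 IH2]]; simpl. split. apply (Cone _ _ _ _ G). apply (Tone _ _ _ _ G).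
  split. now apply (Cmul _ _ _ _ G). rewrite (Tmul _ _ _ _ G); auto. now rewrite IH2. Qed.
Lemma G_fmeet A B C T (G : GoodT A B C T) F N : (forall j, (j <= N)%nat -> C (F j)) ->
  C (fmeet A F N) /\ T (fmeet A F N) = fmeet B (fun j => T (F j)) N.
Proof. induction N as [|N IH]; intro H; simpl. split; auto; apply H; lia.
  destruct IH as [H1 H2]. intros; apply H; lia.
  destruct (G_meet _ _ _ _ G (fmeet A F N) (F (S N)) H1 (H _ (le_n _))) as [H3 H4].
  split; auto. now rewrite H4, H2. Qed.
Lemma G_LT A B C T (G : GoodT A B C T) s a t1 t2 : C a -> C (LT A s a t1 t2) /\ T (LT A s a t1 t2) = LT B s (T a) t1 t2.
Proof. intro Ha. unfold LT. pose proof (Cone _ _ _ _ G).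
  split. apply (Cadd _ _ _ _ G); apply (Cscal _ _ _ _ G); auto.
  rewrite (Tadd _ _ _ _ G), !(Tscal _ _ _ _ G), (Tone _ _ _ _ G); auto; apply (Cscal _ _ _ _ G); auto. Qed.
Lemma rpow_ge0 (E : RPhi) (a : E) n : le zr a -> le zr (rpow E a n).
Proof. intro H. induction n; simpl. apply one_ge0. now apply mul_pos. Qed.

Lemma main_real A B C T (G : GoodT A B C T) (a : A) (s : R) (n : nat) (q : A) (q' : B) :
  0 < s < 1 -> C a -> le zr a -> IsInfR A (SetR A s a) q -> IsInfR B (SetR B s (T a)) q' ->
  C (mul (rpow A a n) q) -> T (mul (rpow A a n) q) = mul (rpow B (T a) n) q'.
Proof. intros Hs HCa Ha Hq Hq' Hp.
  set (c := rpow A a n). set (d := rpow B (T a) n). set (b := T a).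
  destruct (G_pow _ _ _ _ G a n HCa) as [HCc HTc]. fold c d in HTc.
  assert (Hc : le zr c) by now apply rpow_ge0.
  destruct (G_zero _ _ _ _ G) as [HC0 HT0].
  assert (Hb : le zr b) by (unfold b; rewrite <- HT0; now apply (G_mono _ _ _ _ G)).
  assert (Hd : le zr d) by now apply rpow_ge0.
  pose proof (Cone _ _ _ _ G) as HC1.
  assert (HCae : C (add a one)) by now apply (Cadd _ _ _ _ G).
  assert (HTae : T (mul c (add a one)) = mul d (add b one)).
  { rewrite (Tmul _ _ _ _ G), (Tadd _ _ _ _ G), (Tone _ _ _ _ G), HTc; auto. }
  apply le_antisym.
  -
    apply (arch_le _ _ _ (mul d (add b one))). apply mul_pos; auto.
    apply le0_add; auto; apply one_ge0.
    intros eps He. destruct (family_ex s eps Hs He) as (N & f1 & f2 & Hfe & Hf).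
    set (LA := fun j => LT A s a (f1 j) (f2 j)).
    assert (HLA : forall j, C (LA j) /\ T (LA j) = LT B s b (f1 j) (f2 j)) by (intro; now apply G_LT).
    set (Wc := fmeet A (fun j => mul c (LA j)) N).
    destruct (G_fmeet _ _ _ _ G (fun j => mul c (LA j)) N) as [HCW HTW].
    { intros j _. apply (Cmul _ _ _ _ G); auto. apply HLA. }
    fold Wc in HCW, HTW.
    assert (HpW : le (mul c q) Wc).
    { apply fmeet_ge. intros j Hj. apply le_mul_l; auto. apply (proj1 Hq).
      destruct (Hfe j Hj) as (? & ? & ?). exists (f1 j), (f2 j); auto. }
    apply le_trans with (T Wc). now apply (G_mono _ _ _ _ G).
    rewrite HTW.
    assert (E1 : fmeet B (fun j => T (mul c (LA j))) N = mul d (fmeet B (fun j => LT B s b (f1 j) (f2 j)) N)).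
    { rewrite fmeet_mul; auto. f_equal. apply FunctionalExtensionality.functional_extensionality.
      intro j. rewrite (Tmul _ _ _ _ G), HTc, (proj2 (HLA j)); auto. apply HLA. }
    rewrite E1. rewrite <- mul_scalr, <- mulDr. apply le_mul_l; auto.
    apply (key_lower B s eps b q' N f1 f2); auto.
  -
    apply (arch_le _ _ _ (mul d (add b one))). apply mul_pos; auto.
    apply le0_add; auto; apply one_ge0.
    intros eps He. destruct (family_ex s eps Hs He) as (N & f1 & f2 & Hfe & Hf).
    set (LA := fun j => LT A s a (f1 j) (f2 j)).
    assert (HLA : forall j, C (LA j) /\ T (LA j) = LT B s b (f1 j) (f2 j)) by (intro; now apply G_LT).
    set (Wc := fmeet A (fun j => mul c (LA j)) N).
    destruct (G_fmeet _ _ _ _ G (fun j => mul c (LA j)) N) as [HCW HTW].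
    { intros j _. apply (Cmul _ _ _ _ G); auto. apply HLA. }
    fold Wc in HCW, HTW.
    assert (HW : le Wc (add (mul c q) (scal eps (mul c (add a one))))).
    { unfold Wc. rewrite <- fmeet_mul, <- mul_scalr, <- mulDr; auto. apply le_mul_l; auto.
      apply (key_lower A s eps a q N f1 f2); auto. }
    assert (HCr : C (add (mul c q) (scal eps (mul c (add a one))))).
    { apply (Cadd _ _ _ _ G); auto. apply (Cscal _ _ _ _ G), (Cmul _ _ _ _ G); auto. }
    apply (G_mono _ _ _ _ G) in HW; auto.
    assert (HCm : C (mul c (add a one))) by (apply (Cmul _ _ _ _ G); auto).
    assert (HCs : C (scal eps (mul c (add a one)))) by (apply (Cscal _ _ _ _ G); auto).
    rewrite (Tadd _ _ _ _ G) in HW; auto. rewrite (Tscal _ _ _ _ G) in HW; auto.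
    rewrite HTae, HTW in HW.
    apply le_trans with (fmeet B (fun j => T (mul c (LA j))) N); auto.
    apply fmeet_ge. intros j Hj. rewrite (Tmul _ _ _ _ G), HTc, (proj2 (HLA j)); auto; [|apply HLA].
    apply le_mul_l; auto. apply (proj1 Hq').
    destruct (Hfe j Hj) as (? & ? & ?). exists (f1 j), (f2 j); auto. Qed.

Definition emb (K : Kfield) (E : RPhi) : car E -> Kcar K E :=
  match K as K0 return car E -> Kcar K0 E with
  | Kreal => fun x => x | Kcomplex => fun x => (x, zr) end.
Definition prj (K : Kfield) (E : RPhi) : Kcar K E -> car E :=
  match K as K0 return Kcar K0 E -> car E with
  | Kreal => fun x => x | Kcomplex => fun x => fst x end.
Definition embS (K : Kfield) : R -> Kscalar K :=
  match K as K0 return R -> Kscalar K0 with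
  | Kreal => fun c => c | Kcomplex => fun c => (c, 0) end.

Lemma prj_emb K E x : prj K E (emb K E x) = x. Proof. destruct K; reflexivity. Qed.
Lemma emb_inj K E x y : emb K E x = emb K E y -> x = y.
Proof. intro H. rewrite <- (prj_emb K E x), H. apply prj_emb. Qed.
Lemma Kadd_emb K E x y : Kadd K E (emb K E x) (emb K E y) = emb K E (add x y).
Proof. destruct K; simpl; auto. now rewrite add0. Qed.
Lemma Kopp_emb K E x : Kopp K E (emb K E x) = emb K E (opp x).
Proof. destruct K; simpl; auto. now rewrite opp0. Qed.
Lemma Krscal_emb K E c x : Krscal K E c (emb K E x) = emb K E (scal c x).
Proof. destruct K; simpl; auto. now rewrite scal0r. Qed.
Lemma Kscal_emb K E c x : Kscal K E (embS K c) (emb K E x) = emb K E (scal c x).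
Proof. destruct K; simpl; auto. now rewrite !scal0l, !scal0r, !opp0, !addr0. Qed.
Lemma Kmul_emb K E x y : Kmul K E (emb K E x) (emb K E y) = emb K E (mul x y).
Proof. destruct K; simpl; auto. now rewrite !mul0l, !mul0r, !opp0, !addr0. Qed.
Lemma Kone_emb K E : Kone K E = emb K E one. Proof. destruct K; reflexivity. Qed.
Lemma Kpow_emb K E x n : Kpow_nat K E (emb K E x) n = emb K E (rpow E x n).
Proof. induction n; simpl. apply Kone_emb. rewrite IHn. apply Kmul_emb. Qed.
Lemma Kadd0 K E z : Kadd K E (Kzero K E) z = z.
Proof. destruct K; simpl. apply add0. destruct z; simpl; now rewrite !add0. Qed.

Lemma IsSup_unique (E : RPhi) S (m1 m2 : E) : IsSup E S m1 -> IsSup E S m2 -> m1 = m2.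
Proof. intros [H1 H2] [H3 H4]. apply le_antisym; [apply H2|apply H4]; auto. Qed.

Lemma scal_le_abs (E : RPhi) (c : R) (x : E) : -1 <= c <= 1 -> le (scal c x) (abs x).
Proof. intro Hc. destruct (Rle_or_lt 0 c) as [H|H].
  - apply le_trans with (scal c (abs x)). apply le_scal_mono; auto. apply le_abs.
    rewrite <- (scal1 _ (abs x)) at 2. apply le_scal_l. lra. apply abs_ge0.
  - replace c with (- - c) by ring. rewrite scalNl, <- scalNr.
    apply le_trans with (scal (- c) (abs x)). apply le_scal_mono. lra. apply le_abs_opp.
    rewrite <- (scal1 _ (abs x)) at 2. apply le_scal_l. lra. apply abs_ge0. Qed.

Lemma IsAbs_emb K E x m : IsAbs K E (emb K E x) m <-> m = emb K E (abs x).
Proof. destruct K; simpl.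
  - rewrite (IsSup_sup E x (opp x) m). reflexivity.
  - assert (HS : IsSup E (fun v => exists t, 0 <= t <= 2 * PI /\ v = add (scal (cos t) x) (scal (sin t) zr)) (abs x)).
    { split.
      - intros v (t & Ht & ->). rewrite scal0r, addr0. apply scal_le_abs. apply COS_bound.
      - intros u H. apply sup_le.
        + assert (Hx : x = add (scal (cos 0) x) (scal (sin 0) zr)) by
            (rewrite cos_0, sin_0, scal1, scal0r, addr0; reflexivity).
          rewrite Hx at 1. apply H. exists 0. split; auto. pose proof PI_RGT_0; lra.
        + assert (Hx : opp x = add (scal (cos PI) x) (scal (sin PI) zr)) by
            (rewrite cos_PI, sin_PI, scal0r, addr0, scalN1; reflexivity).
          rewrite Hx. apply H. exists PI. split; auto. pose proof PI_RGT_0; lra. }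
    split.
    + intros [H1 H2]. destruct m as [m1 m2]. simpl in *. subst m2. f_equal. eapply IsSup_unique; eauto.
    + intros ->. simpl. split; auto. Qed.

Lemma Kpos_emb K E x : Kpos K E (emb K E x) <-> le zr x.
Proof. unfold Kpos. rewrite IsAbs_emb. split.
  - intro H. apply emb_inj in H. rewrite H. apply abs_ge0.
  - intro H. now rewrite abs_pos. Qed.
Lemma Kle_emb K E x y : Kle K E (emb K E x) (emb K E y) <-> le x y.
Proof. unfold Kle. rewrite Kopp_emb, Kadd_emb, Kpos_emb. split. apply sub0_le. apply le_sub0. Qed.
Lemma Kle_real K E m x : Kle K E m (emb K E x) -> exists mr, m = emb K E mr.
Proof. destruct K; simpl. intros; eauto. unfold Kle, Kpos. simpl. intros [H _].
  exists (fst m). destruct m as [m1 m2]; simpl in *. rewrite add0 in H.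
  f_equal. rewrite <- opp0, <- H. now rewrite oppK. Qed.

Lemma inf_bridge K E (S : Kcar K E -> Prop) (P : E -> Prop) m :
  (forall y, S y <-> exists x, P x /\ y = emb K E x) -> (exists x, P x) ->
  KIsInf K E S m -> exists mr, m = emb K E mr /\ IsInfR E P mr.
Proof. intros HS [x0 Hx0] [H1 H2].
  assert (Hm : Kle K E m (emb K E x0)) by (apply H1, HS; eauto).
  destruct (Kle_real _ _ _ _ Hm) as [mr ->]. exists mr. split; auto. split.
  - intros x Hx. apply (Kle_emb K). apply H1, HS; eauto.
  - intros l Hl. apply (Kle_emb K). apply H2. intros y Hy. apply HS in Hy.
    destruct Hy as (x & Hx & ->). apply Kle_emb; auto. Qed.
Lemma inf_bridge_back K E (S : Kcar K E -> Prop) (P : E -> Prop) mr :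
  (forall y, S y <-> exists x, P x /\ y = emb K E x) -> (exists x, P x) ->
  IsInfR E P mr -> KIsInf K E S (emb K E mr).
Proof. intros HS [x0 Hx0] [H1 H2]. split.
  - intros y Hy. apply HS in Hy. destruct Hy as (x & Hx & ->). apply Kle_emb; auto.
  - intros l Hl. assert (Hl0 : Kle K E l (emb K E x0)) by (apply Hl, HS; eauto).
    destruct (Kle_real _ _ _ _ Hl0) as [lr ->]. apply Kle_emb. apply H2.
    intros x Hx. apply (Kle_emb K). apply Hl, HS; eauto. Qed.

Lemma IsAbs_real K E u m : IsAbs K E u m -> m = emb K E (prj K E m).
Proof. destruct K; simpl; auto. intros [H _]. destruct m; simpl in *; now subst. Qed.

Lemma T_real K A B C T (HC : KPhiSub K A C) (HT : KLatHomOn K A B C T) x :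
  C (emb K A x) -> T (emb K A x) = emb K B (prj K B (T (emb K A x))).
Proof. intro Hx. destruct HC as (Cadd' & Cscal' & _ & _ & Cabs').
  destruct HT as [[Tadd' Tscal'] Tabs'].
  set (ax := abs x). set (z := sub ax x).
  assert (Ha : IsAbs K A (emb K A x) (emb K A ax)) by now apply IsAbs_emb.
  assert (HCa : C (emb K A ax)) by (eapply Cabs'; eauto).
  assert (Hez : emb K A z = Kadd K A (emb K A ax) (Kscal K A (embS K (-1)) (emb K A x))).
  { now rewrite Kscal_emb, Kadd_emb, scalN1. }
  assert (HCz : C (emb K A z)) by (rewrite Hez; apply Cadd'; auto).
  assert (Hz0 : le zr z) by (apply le_sub0, le_abs).
  assert (Hza : IsAbs K A (emb K A z) (emb K A z)) by (apply IsAbs_emb; now rewrite abs_pos).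
  assert (Hex : emb K A x = Kadd K A (emb K A ax) (Kscal K A (embS K (-1)) (emb K A z))).
  { rewrite Kscal_emb, Kadd_emb, scalN1. f_equal. unfold z. rewrite oppB. unfold sub.
    rewrite addC, addKr. reflexivity. }
  pose proof (IsAbs_real _ _ _ _ (Tabs' _ _ Hx Ha)) as R1.
  pose proof (IsAbs_real _ _ _ _ (Tabs' _ _ HCz Hza)) as R2.
  rewrite Hex, Tadd', Tscal'; auto. rewrite R1, R2, Kscal_emb, Kadd_emb, prj_emb. reflexivity. Qed.

Lemma good K A B C T (HC : KPhiSub K A C) (HT : KLatHomOn K A B C T)
  (HM : KMultOn K A B C T) (HTe : T (Kone K A) = Kone K B) :
  GoodT A B (fun x => C (emb K A x)) (fun x => prj K B (T (emb K A x))).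
Proof. pose proof (T_real _ _ _ _ _ HC HT) as TR.
  destruct HC as (Cadd' & Cscal' & Cmul' & Cone' & Cabs').
  destruct HT as [[Tadd' Tscal'] Tabs']. split.
  - intros x y Hx Hy. rewrite <- Kadd_emb. auto.
  - intros c x Hx. rewrite <- Kscal_emb. auto.
  - intros x y Hx Hy. rewrite <- Kmul_emb. auto.
  - rewrite <- Kone_emb. auto.
  - intros x Hx. eapply Cabs'; eauto. now apply IsAbs_emb.
  - intros x y Hx Hy. rewrite <- Kadd_emb, Tadd'; auto.
    generalize (TR x Hx) (TR y Hy); generalize (T (emb K A x)) (T (emb K A y)); intros u v Hu Hv.
    rewrite Hu, Hv, Kadd_emb, !prj_emb; reflexivity.
  - intros c x Hx. rewrite <- Kscal_emb, Tscal'; auto.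
    generalize (TR x Hx); generalize (T (emb K A x)); intros u Hu.
    rewrite Hu, Kscal_emb, !prj_emb; reflexivity.
  - intros x Hx. assert (Ha : IsAbs K A (emb K A x) (emb K A (abs x))) by now apply IsAbs_emb.
    pose proof (Tabs' _ _ Hx Ha) as H. rewrite (TR x Hx) in H. apply IsAbs_emb in H.
    rewrite H. apply prj_emb.
  - intros x y Hx Hy. rewrite <- Kmul_emb, HM; auto.
    generalize (TR x Hx) (TR y Hy); generalize (T (emb K A x)) (T (emb K A y)); intros u v Hu Hv.
    rewrite Hu, Hv, Kmul_emb, !prj_emb; reflexivity.
  - rewrite <- Kone_emb, HTe, Kone_emb. apply prj_emb. Qed.

Lemma Kpos_real K E a : Kpos K E a -> exists x, a = emb K E x /\ le zr x.
Proof. intro H. pose proof (IsAbs_real _ _ _ _ H) as R. exists (prj K E a). split; auto.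
  apply (Kpos_emb K). now rewrite <- R. Qed.

Lemma set_bridge K E s x y :
  (exists t1 t2, 0 < t1 /\ 0 < t2 /\ Rpower t1 s * Rpower t2 (1 - s) = 1 /\
     y = Kadd K E (Krscal K E (s * t1) (emb K E x)) (Krscal K E ((1 - s) * t2) (Kone K E)))
  <-> exists z, SetR E s x z /\ y = emb K E z.
Proof. split.
  - intros (t1 & t2 & H1 & H2 & H3 & ->). exists (LT E s x t1 t2). split.
    exists t1, t2; auto. unfold LT. now rewrite Kone_emb, !Krscal_emb, Kadd_emb.
  - intros (z & (t1 & t2 & H1 & H2 & H3 & ->) & ->). exists t1, t2. repeat split; auto.
    unfold LT. now rewrite Kone_emb, !Krscal_emb, Kadd_emb. Qed.

Theorem corollary4p4 (K : Kfield) (A B : RPhi)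
  (HA : KVL K A) (HB : KVL K B)
  (HwA : WGMClosed K A) (HwB : WGMClosed K B)
  (C : Kcar K A -> Prop) (HC : KPhiSub K A C)
  (T : Kcar K A -> Kcar K B)
  (HTlat : KLatHomOn K A B C T) (HTmul : KMultOn K A B C T)
  (HTe : T (Kone K A) = Kone K B)
  (a : Kcar K A) (ha : Kpos K A a) (r : R) (hr : 0 < r)
  (haC : C a) (p : Kcar K A) (hp : IsRPow K A a r p) (hpC : C p) :
  IsRPow K B (T a) r (T p).
Proof.
  pose proof (good _ _ _ _ _ HC HTlat HTmul HTe) as G.
  set (Cr := fun x => C (emb K A x)) in G. set (Tr := fun x => prj K B (T (emb K A x))) in G.
  destruct (Kpos_real _ _ _ ha) as (ar & -> & Har).
  assert (HTa : T (emb K A ar) = emb K B (Tr ar)) by (apply (T_real _ _ _ _ _ HC HTlat); auto).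
  rewrite HTa.
  destruct hp as (n & q & Hn & Hint & Hnon & ->).
  assert (Hfin : forall qr, q = emb K A qr -> C (Kmul K A (Kpow_nat K A (emb K A ar) n) q) ->
     T (Kmul K A (Kpow_nat K A (emb K A ar) n) q) = emb K B (Tr (mul (rpow A ar n) qr))).
  { intros qr -> Hc. rewrite Kpow_emb, Kmul_emb in *. apply (T_real _ _ _ _ _ HC HTlat); auto. }
  destruct (Req_dec r (INR n)) as [Heq|Hneq].
  - exists n, (Kone K B). split; auto. split; auto. split; [intro; contradiction|].
    rewrite (Hfin one) by (auto; rewrite (Hint Heq); apply Kone_emb).
    rewrite Kone_emb, Kpow_emb, Kmul_emb. f_equal.
    destruct (G_pow _ _ _ _ G ar n haC) as [HC1 HT1].
    rewrite (Tmul _ _ _ _ G), HT1, (Tone _ _ _ _ G); auto. apply (Cone _ _ _ _ G).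
  - set (s := r - INR n). assert (Hs : 0 < s < 1) by (unfold s; destruct Hn; split; lra).
    assert (Hne : forall (E : RPhi) (x : E), exists z, SetR E s x z).
    { intros E x. exists (LT E s x 1 1), 1, 1. repeat split; try lra.
      unfold Rpower. rewrite ln_1, !Rmult_0_r, exp_0. lra. }
    destruct (inf_bridge K A _ (SetR A s ar) q (set_bridge K A s ar) (Hne A ar) (Hnon Hneq)) as (qr & -> & Hqr).
    destruct (G_zero _ _ _ _ G) as [HC0 HT0].
    assert (HTar : le zr (Tr ar)) by (rewrite <- HT0; apply (G_mono _ _ _ _ G); auto).
    set (rr := fun k => if Nat.eqb k 0 then s else 1 - s).
    set (g := fun k => if Nat.eqb k 0 then emb K B (Tr ar) else Kone K B).
    destruct (HwB 2%nat g rr g) as [m Hm].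
    { intros [|[|k]] Hk; unfold rr; simpl. lra. lra. lia. }
    { unfold rr; simpl. lra. }
    { intros [|[|k]] Hk; unfold g; simpl. apply IsAbs_emb. now rewrite abs_pos.
      rewrite Kone_emb. apply IsAbs_emb. rewrite abs_pos; auto. apply one_ge0. lia. }
    assert (HS' : forall y, (exists th : nat -> R,
       (forall k : nat, (k < 2)%nat -> 0 < th k) /\
       Rprodn 2 (fun k : nat => Rpower (th k) (rr k)) = 1 /\
       y = Ksum K B 2 (fun k : nat => Krscal K B (rr k * th k) (g k))) <->
       exists x, SetR B s (Tr ar) x /\ y = emb K B x).
    { intro y. split.
      - intros (th & Hth & Hpr & ->). unfold rr, g in Hpr |- *. simpl in Hpr |- *. rewrite Kadd0.
        exists (LT B s (Tr ar) (th O) (th 1%nat)). split.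
        exists (th O), (th 1%nat). repeat split; try (apply Hth; lia). lra.
        unfold LT. rewrite Kone_emb, !Krscal_emb, Kadd_emb. reflexivity.
      - intros (z & (t1 & t2 & H1 & H2 & Ht & ->) & ->).
        exists (fun k => if Nat.eqb k 0 then t1 else t2). split.
        intros [|k] _; simpl; auto. unfold rr, g. simpl. split. lra.
        rewrite Kadd0. unfold LT. rewrite Kone_emb, !Krscal_emb, Kadd_emb. reflexivity. }
    destruct (inf_bridge K B _ _ m HS' (Hne B (Tr ar)) Hm) as (q'r & -> & Hq'r).
    exists n, (emb K B q'r). split; auto. split; [intro; contradiction|]. split.
    { intros _. exact (inf_bridge_back K B _ _ q'r (set_bridge K B s (Tr ar)) (Hne B (Tr ar)) Hq'r). }
    rewrite (Hfin qr); auto. rewrite Kpow_emb, Kmul_emb. f_equal.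
    apply (main_real _ _ _ _ G ar s n qr q'r); auto. rewrite Kpow_emb, Kmul_emb in hpC. exact hpC.
Qed.
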